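(* There is a computable function $g$ such that the following holds. Let $A \in \mathbb{Z}^{m \times n}$ and let $F$ be a td-decomposition of $G_P(A)$. Let $A_B \in \mathbb{Z}^{m \times m}$ be a submatrix of $A$ formed by a collection of $m$ columns of $A$ which is invertible. Then $\mathrm{fr}(A_B^{-1}) \le g(\mathrm{height}(F), \|A\|_\infty)$.
   Context: The primal graph $G_P(A)$ of a matrix $A$ has one vertex per column of $A$, two columns being adjacent if some row of $A$ has non-zero entries in both columns. For a rooted tree $F$, its closure $\mathrm{cl}(F)$ is the graph obtained from $F$ by making every vertex adjacent to all its ancestors; $\mathrm{height}(F)$ is the maximum number of vertices on a root-leaf path. A td-decomposition of a graph $G$ is a rooted tree $F$ on the vertex set of $G$ such that $G$ is a subgraph of $\mathrm{cl}(F)$. For a rational matrix $M$, $\mathrm{fr}(M)$ (the fractionality of $M$) is the maximum denominator among all entries of $M$ written as fractions in lowest terms. *)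

(* Defs.v *)
From HB Require Import structures.
From mathcomp Require Import all_boot all_order all_algebra.
Set Implicit Arguments. Unset Strict Implicit. Unset Printing Implicit Defensive.
Import Order.TTheory GRing.Theory Num.Theory.
Local Open Scope ring_scope.

Definition primal_graph (m n : nat) (A : 'M[int]_(m, n)) : rel 'I_n :=
  fun i j => (i != j) && [exists r : 'I_m, (A r i != 0) && (A r j != 0)].

(* A rooted tree on vertex set 'I_n is given by its parent function
   p : 'I_n -> option 'I_n (None for the root). *)
Fixpoint up (n : nat) (p : 'I_n -> option 'I_n) (k : nat) (v : 'I_n)
  : option 'I_n :=
  match k with
  | 0 => Some v
  | k'.+1 => if up p k' v is Some w then p w else None
  end.

(* u is a proper ancestor of v (reached by k >= 1 parent steps; in an
   acyclic parent structure on n vertices k <= n suffices). *)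
Definition ancestor (n : nat) (p : 'I_n -> option 'I_n) (u v : 'I_n) : bool :=
  [exists k : 'I_n.+1, (0 < (k : nat))%N && (up p k v == Some u)].

Definition rooted_tree (n : nat) (p : 'I_n -> option 'I_n) : Prop :=
  (forall (k : nat) (v : 'I_n), (0 < k)%N -> up p k v <> Some v) /\
  #|[set v | p v == None]| = 1%N.

Definition closure_edge (n : nat) (p : 'I_n -> option 'I_n) : rel 'I_n :=
  fun u v => ancestor p u v || ancestor p v u.

Definition td_decomposition (n : nat) (G : rel 'I_n)
    (p : 'I_n -> option 'I_n) : Prop :=
  rooted_tree p /\ (forall u v, G u v -> closure_edge p u v).

(* height(F): max number of vertices on a root-leaf path = max over v of
   the number of vertices on the root-v path (v and its ancestors). *)
Definition height (n : nat) (p : 'I_n -> option 'I_n) : nat :=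
  \max_(v : 'I_n) #|[set u | (u == v) || ancestor p u v]|.

Definition mx_norm_inf (m n : nat) (A : 'M[int]_(m, n)) : nat :=
  \max_(i : 'I_m) \max_(j : 'I_n) `|A i j|%N.

Definition fr (m n : nat) (M : 'M[rat]_(m, n)) : nat :=
  \max_(i : 'I_m) \max_(j : 'I_n) `|denq (M i j)|%N.

Definition to_rat (m n : nat) (A : 'M[int]_(m, n)) : 'M[rat]_(m, n) :=
  map_mx (fun z : int => z%:~R) A.

(* Main.v *)
Require Import Defs.
From HB Require Import structures.
From mathcomp Require Import all_boot all_order all_algebra.
From mathcomp Require Import zify ring.
Set Implicit Arguments. Unset Strict Implicit. Unset Printing Implicit Defensive.
Import Order.TTheory GRing.Theory Num.Theory.

Section Tree.
Variables (n : nat) (p : 'I_n -> option 'I_n).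

Lemma up_add a b v : up p (a + b) v = if up p b v is Some w then up p a w else None.
Proof.
elim: a => [|a IH]; first by rewrite add0n /=; case: (up p b v).
rewrite addSn /= IH; by case: (up p b v).
Qed.

Lemma up_none k v : up p k v = None -> forall k', (k <= k')%N -> up p k' v = None.
Proof.
move=> H k' Hk; rewrite -(subnK Hk) up_add H //.
Qed.

Definition anc (u v : 'I_n) : Prop := exists2 k, (0 < k)%N & up p k v = Some u.

Hypothesis acyc : forall (k : nat) (v : 'I_n), (0 < k)%N -> up p k v <> Some v.

Lemma anc_trans u w v : anc u w -> anc w v -> anc u v.
Proof.
case=> a a0 Ha [b b0 Hb]; exists (a + b); first by lia.
by rewrite up_add Hb.
Qed.

Lemma anc_irr u : ~ anc u u.
Proof. by case=> k k0 H; exact: (acyc k0 H). Qed.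

Lemma anc_cmp u w v : anc u v -> anc w v -> u = w \/ anc u w \/ anc w u.
Proof.
case=> a a0 Ha [b b0 Hb].
case: (ltngtP a b) => Hab.
- right; right; exists (b - a); first by lia.
  by move: Hb; rewrite -{1}(subnK (ltnW Hab)) up_add Ha.
- right; left; exists (a - b); first by lia.
  by move: Ha; rewrite -{1}(subnK (ltnW Hab)) up_add Hb.
- by left; move: Ha; rewrite Hab Hb => -[].
Qed.

Lemma up_some_bound k v u : up p k v = Some u -> (k < n)%N.
Proof.
move=> H.
have Hs : forall i, (i <= k)%N -> exists w, up p i v = Some w.
  move=> i Hi; case E: (up p i v) => [w|]; first by exists w.
  by rewrite (up_none E Hi) in H.
pose f (i : 'I_k.+1) : 'I_n := odflt u (up p i v).
have finj : injective f.
  move=> i j; rewrite /f.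
  have [wi Hi] := Hs i (ltn_ord i); have [wj Hj] := Hs j (ltn_ord j).
  rewrite Hi Hj /= => Eij; subst wj.
  apply/val_inj; case: (ltngtP i j) => // Hl.
  + exfalso; apply: (@acyc (j - i) wi); first by lia.
    by rewrite -Hj -[X in _ = up p X v](subnK (ltnW Hl)) up_add Hi.
  + exfalso; apply: (@acyc (i - j) wi); first by lia.
    by rewrite -Hi -[X in _ = up p X v](subnK (ltnW Hl)) up_add Hj.
have := leq_card f finj; rewrite !card_ord; lia.
Qed.

Lemma ancestorP u v : reflect (anc u v) (ancestor p u v).
Proof.
apply: (iffP existsP) => [[k /andP [k0 /eqP H]] | [k k0 H]].
  by exists k.
have kn := up_some_bound H.
have kn1 : (k < n.+1)%N by lia.
by exists (Ordinal kn1); rewrite /= k0 H eqxx.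
Qed.
End Tree.

Local Open Scope ring_scope.
Section Lin.
Variables m n : nat.
Implicit Types (A : 'M[int]_(m, n)) (y z : 'rV[rat]_n) (U : {set 'I_n}) (W : {set 'I_m}).

Definition rv (A : 'M[int]_(m, n)) (y : 'rV[rat]_n) (i : 'I_m) : rat :=
  \sum_j (A i j)%:~R * y 0 j.
Definition supp (y : 'rV[rat]_n) (U : {set 'I_n}) := forall j, j \notin U -> y 0 j = 0.
Definition injS A U (W : {set 'I_m}) := forall y, supp y U ->
  (forall i, i \in W -> rv A y i = 0) -> y = 0.
Definition good A (L : nat) U (W : {set 'I_m}) := forall y, supp y U ->
  (forall i, i \in W -> rv A y i \is a Num.int) -> forall j, (L%:R * y 0 j) \is a Num.int.
Definition restr (y : 'rV[rat]_n) (U : {set 'I_n}) : 'rV[rat]_n :=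
  \row_j (if j \in U then y 0 j else 0).
Definition delta (j1 : 'I_n) : 'rV[rat]_n := \row_j (j == j1)%:R.

Lemma rvD A y z i : rv A (y + z) i = rv A y i + rv A z i.
Proof. by rewrite /rv -big_split; apply: eq_bigr => j _; rewrite mxE mulrDr. Qed.

Lemma rvZ A t y i : rv A (t *: y) i = t * rv A y i.
Proof.
by rewrite /rv mulr_sumr; apply: eq_bigr => j _; rewrite mxE mulrCA.
Qed.

Lemma rv_delta A j1 i : rv A (delta j1) i = (A i j1)%:~R.
Proof.
rewrite /rv (bigD1 j1) //= big1 ?addr0 => [|j /negbTE Hj]; rewrite mxE ?eqxx ?mulr1 //.
by rewrite Hj mulr0.
Qed.

Lemma rv_ext (A : 'M[int]_(m, n)) (y z : 'rV[rat]_n) i : (forall j, A i j != 0 -> y 0 j = z 0 j) -> rv A y i = rv A z i.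
Proof.
move=> H; apply: eq_bigr => j _.
have [->|/H ->] := eqVneq (A i j) 0; first by rewrite !mul0r.
done.
Qed.

Lemma rv_int A y i : (forall j, y 0 j \is a Num.int) -> rv A y i \is a Num.int.
Proof.
move=> H; apply: rpred_sum => j _; apply: rpredM => //.
by rewrite Num.Theory.intr_int.
Qed.

Lemma rv_natM A (L : nat) y i : rv A ((L%:R : rat) *: y) i = L%:R * rv A y i.
Proof. exact: rvZ. Qed.


Lemma restr_supp y U : supp (restr y U) U.
Proof. by move=> j Hj; rewrite mxE (negbTE Hj). Qed.

End Lin.

Fixpoint D (s a : nat) : nat :=
  if s is s'.+1 then (a`! * D s' (a * a + a * a))%N else 1%N.

Lemma D_gt0 s a : (0 < D s a)%N.
Proof. elim: s a => [|s IH] a //=; by rewrite muln_gt0 fact_gt0 IH. Qed.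

Lemma supp0 n (y : 'rV[rat]_n) (L : nat) j :
  supp y set0 -> (L%:R * y 0 j) \is a Num.int.
Proof. by move=> H; rewrite H ?in_set0 // mulr0 rpred0. Qed.

Lemma dense m n s : forall a (A : 'M[int]_(m, n)) (S : {set 'I_n}) (W : {set 'I_m}),
  (forall i j, absz (A i j) <= a)%N -> (#|S| <= s)%N -> injS A S W ->
  good A (D s a) S W.
Proof.
elim: s => [|s IH] a A S W Ha HS Hinj y Hy Hrows j0.
  have S0 : S = set0 by apply/eqP; rewrite -cards_eq0; lia.
  by subst S; apply: supp0.
case: (set_0Vmem S) => [S0 | [j1 Hj1]]; first by subst S; apply: supp0.
have [i0 Hi0 Hc] : exists2 i0, i0 \in W & A i0 j1 != 0.
  case: (boolP [exists i in W, A i j1 != 0]) => [/exists_inP [i0 H1 H2] | /exists_inPn H].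
    by exists i0.
  exfalso.
  have : delta j1 = 0.
    apply: Hinj.
      move=> k Hk; rewrite mxE; case: eqP => // E; subst k; by rewrite Hj1 in Hk.
    move=> i Hi; rewrite rv_delta; have := H i Hi; rewrite negbK => /eqP ->; done.
  move/matrixP => /(_ 0 j1); rewrite !mxE eqxx; move/eqP; by rewrite oner_eq0.
set c := A i0 j1.
have cz : (c%:~R : rat) != 0 by rewrite intr_eq0.
pose A' := \matrix_(i, j) (c * A i j - A i j1 * A i0 j).
have Ha' : forall i j, (absz (A' i j) <= a * a + a * a)%N.
  move=> i j; rewrite mxE; have := Ha i j; have := Ha i j1; have := Ha i0 j;
  have := Ha i0 j1; rewrite -/c; move=> *; nia.
have A'j1 : forall i, A' i j1 = 0.
  by move=> i; rewrite mxE /c mulrC subrr.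
have rv' : forall z i, rv A' z i = c%:~R * rv A z i - (A i j1)%:~R * rv A z i0.
  move=> z i; rewrite /rv !mulr_sumr -sumrB; apply: eq_bigr => k _.
  rewrite mxE intrB !intrM; ring.
set S' := S :\ j1.
have HS' : (#|S'| <= s)%N by move: HS; rewrite (cardsD1 j1 S) Hj1.
have inj' : injS A' S' W.
  move=> z Hz Hzr.
  pose t := - rv A z i0 / c%:~R.
  pose yy := z + t *: delta j1.
  have Hy0 : rv A yy i0 = 0.
    rewrite rvD rvZ rv_delta /t -/c; by field.
  have Hyr : forall i, i \in W -> rv A yy i = 0.
    move=> i Hi; have := rv' yy i; rewrite Hy0 mulr0 subr0.
    rewrite rvD rvZ rv_delta A'j1 mulr0 addr0 Hzr // => /esym /eqP.
    by rewrite mulf_eq0 (negbTE cz) /= => /eqP.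
  have Hsy : supp yy S.
    move=> k Hk; rewrite !mxE Hz; last by rewrite in_setD1 negb_and Hk orbT.
    case: eqP => [E|_]; last by rewrite mulr0 addr0.
    by subst k; rewrite Hj1 in Hk.
  have := Hinj yy Hsy Hyr; move/matrixP => Hyy.
  apply/matrixP => i k; rewrite (ord1 i) mxE.
  have [E|Ne] := eqVneq k j1.
    by subst k; apply: Hz; rewrite in_setD1 eqxx.
  by have := Hyy 0 k; rewrite !mxE (negbTE Ne) mulr0 addr0.
pose L' := D s (a * a + a * a).
pose z := restr y S'.
have Hz : supp z S' by apply: restr_supp.
have Hzr : forall i, i \in W -> rv A' z i \is a Num.int.
  move=> i Hi.
  have -> : rv A' z i = rv A' y i.
    apply: rv_ext => k Hk; rewrite mxE in_setD1.
    have [E|Ne] := eqVneq k j1; first by subst k; rewrite A'j1 eqxx in Hk.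
    case: (boolP (k \in S)) => // Hk'; by rewrite Hy.
  rewrite rv'; apply: rpredB; apply: rpredM; rewrite ?Num.Theory.intr_int //; apply: Hrows => //.
have HL' := IH _ A' S' W Ha' HS' inj' z Hz Hzr.
have Hdec : y = z + y 0 j1 *: delta j1.
  apply/matrixP => i k; rewrite (ord1 i) !mxE in_setD1.
  have [E|Ne] := eqVneq k j1; first by subst k; rewrite /= mulr1 add0r.
  rewrite mulr0 addr0 /=; case: (boolP (k \in S)) => // Hk; by rewrite Hy.
rewrite /= natrM -mulrA.
have [E|Ne] := eqVneq j0 j1; last first.
  have -> : y 0 j0 = z 0 j0 by rewrite {1}Hdec !mxE (negbTE Ne) mulr0 addr0.
  by apply: rpredM; rewrite ?Num.Theory.natr_int.
subst j0.
have key : c%:~R * (L'%:R * y 0 j1) = L'%:R * rv A y i0 - rv A (L'%:R *: z) i0.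
  rewrite {2}Hdec rvD rvZ rvZ rv_delta -/c; ring.
have Hkey : c%:~R * (L'%:R * y 0 j1) \is a Num.int.
  rewrite key; apply: rpredB.
    by apply: rpredM; rewrite ?Num.Theory.natr_int // Hrows.
  by apply: rv_int => k; rewrite mxE.
have : (c %| (a`!)%:Z)%Z.
  rewrite dvdzE /=; apply: dvdn_fact; rewrite Ha andbT absz_gt0 //.
case/dvdzP => q Hq.
have -> : (a`!)%:R = (q%:~R * c%:~R : rat) by rewrite -intrM -Hq.
by rewrite -mulrA; apply: rpredM; rewrite ?Num.Theory.intr_int.
Qed.
Lemma greedy (I : finType) n (Vs : I -> 'M[rat]_n) k : forall (V : 'M[rat]_n),
  (\rank V <= k)%N ->
  (forall y : 'rV_n, (y <= V)%MS -> (forall i, (y <= Vs i)%MS) -> y = 0) ->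
  exists J : {set I}, (#|J| <= k)%N /\
    forall y : 'rV_n, (y <= V)%MS -> (forall i, i \in J -> (y <= Vs i)%MS) -> y = 0.
Proof.
elim: k => [|k IH] V HV H.
  case: (boolP [forall i, (V <= Vs i)%MS]) => [/forallP Hall | /forallPn [i Hi]].
    exists set0; split; first by rewrite cards0.
    move=> y Hy _; apply: H => // i; exact: submx_trans Hy (Hall i).
  exfalso; move: HV; rewrite leqn0 mxrank_eq0 => /eqP V0.
  by move: Hi; rewrite V0 sub0mx.
case: (boolP [forall i, (V <= Vs i)%MS]) => [/forallP Hall | /forallPn [i Hi]].
  exists set0; split; first by rewrite cards0.
  move=> y Hy _; apply: H => // i; exact: submx_trans Hy (Hall i).
pose V' := (V :&: Vs i)%MS.
have Hlt : (\rank V' < \rank V)%N.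
  have := mxrank_leqif_eq (capmxSl V (Vs i)); rewrite -/V' => -[Hle Heq].
  rewrite ltn_neqAle Hle andbT; apply/negP => /eqP Er.
  have : (V' == V)%MS by rewrite -Heq Er.
  move/andP => [_ HVV']; by rewrite (submx_trans HVV' (capmxSr V (Vs i))) in Hi.
have HV' : (\rank V' <= k)%N by lia.
have H' : forall y : 'rV_n, (y <= V')%MS -> (forall i, (y <= Vs i)%MS) -> y = 0.
  move=> y Hy Hall; apply: H => //; exact: submx_trans Hy (capmxSl _ _).
have [J [HJ HJy]] := IH V' HV' H'.
exists (i |: J); split; first by rewrite cardsU1; case: (i \in J); lia.
move=> y Hy HyJ; apply: HJy.
  by rewrite sub_capmx Hy HyJ // setU11.
by move=> j Hj; apply: HyJ; rewrite setU1r.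
Qed.
Definition PX n (X : {set 'I_n}) : 'M[rat]_n := \sum_(j in X) delta_mx j j.

Lemma Pdelta n (y : 'rV[rat]_n) j k : (y *m delta_mx j j) 0 k = if k == j then y 0 j else 0.
Proof.
rewrite mxE (bigD1 j) //= big1 => [|l Hl]; rewrite !mxE.
  by rewrite eqxx /= addr0; case: (k == j); rewrite ?mulr1 ?mulr0.
by rewrite (negbTE Hl) mulr0.
Qed.

Lemma PX_mul n (y : 'rV[rat]_n) X : y *m PX X = restr y X.
Proof.
apply/matrixP => i k; rewrite (ord1 i) mulmx_sumr summxE !mxE.
rewrite (eq_bigr (fun j => if k == j then y 0 j else 0)); last by move=> j _; rewrite Pdelta.
rewrite -big_mkcondr /=.
case: (boolP (k \in X)) => Hk.
  rewrite (big_pred1 k) // => j /=; rewrite eq_sym; case: eqP => [->|]; by rewrite ?Hk ?andbF.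
rewrite big_pred0 // => j /=; case: eqP => [<-|]; by rewrite ?(negbTE Hk) ?andbF.
Qed.

Lemma PX_rank n (X : {set 'I_n}) : (\rank (PX X) <= #|X|)%N.
Proof.
rewrite /PX -sum1_card; elim/big_rec2: _ => [|j k B _ Hk]; first by rewrite mxrank0.
apply: leq_trans (mxrank_add _ _) _; rewrite mxrank_delta; lia.
Qed.



Lemma restr_id n (y : 'rV[rat]_n) U : supp y U -> restr y U = y.
Proof.
move=> H; apply/matrixP => i k; rewrite (ord1 i) mxE; case: (boolP (k \in U)) => // Hk.
by rewrite H.
Qed.

Lemma sub_PX n (y : 'rV[rat]_n) X : reflect (supp y X) (y <= PX X)%MS.
Proof.
apply: (iffP idP) => [/submxP [D ->] j Hj | H].
  by rewrite PX_mul mxE (negbTE Hj).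
by rewrite -(restr_id H) -PX_mul submxMl.
Qed.

Section Main.
Variables (m n : nat) (A : 'M[int]_(m, n)) (a : nat) (ancb : rel 'I_n).
Hypothesis Ha : forall i j, (absz (A i j) <= a)%N.
Hypothesis Htr : forall u w v, ancb u w -> ancb w v -> ancb u v.
Hypothesis Hirr : forall u, ~~ ancb u u.
Hypothesis Hcmp : forall u w v, ancb u v -> ancb w v -> u = w \/ ancb u w \/ ancb w u.
Hypothesis Hrow : forall i j j', A i j != 0 -> A i j' != 0 -> j != j' -> ancb j j' || ancb j' j.

Section Top.
Variable Q : {set 'I_n}.

Definition top j := [arg min_(u < j | (u \in Q) && ((u == j) || ancb u j)) #|[set w | ancb w u]|].

Lemma top_spec j : j \in Q ->
  [/\ top j \in Q, (top j == j) || ancb (top j) j & forall w, w \in Q -> ~~ ancb w (top j)].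
Proof.
move=> Hj; rewrite /top; case: arg_minnP => [|t /andP [Ht Htj] Hmin]; first by rewrite Hj eqxx.
split=> // w Hw; apply/negP => Hwt.
have Hwj : ancb w j.
  by case/orP: Htj => [/eqP <-|Htj] //; apply: Htr Hwt Htj.
have := Hmin w; rewrite Hw Hwj orbT => /(_ isT).
apply/negP; rewrite -ltnNge; apply: proper_card; apply/properP; split.
  by apply/subsetP => x; rewrite !inE => Hx; apply: Htr Hx Hwt.
by exists w; rewrite !inE ?Hwt ?Hirr.
Qed.

Lemma root_uniq j t1 t2 : t1 \in Q -> t2 \in Q ->
  (t1 == j) || ancb t1 j -> (t2 == j) || ancb t2 j ->
  (forall w, w \in Q -> ~~ ancb w t1) -> (forall w, w \in Q -> ~~ ancb w t2) -> t1 = t2.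
Proof.
move=> H1 H2 /orP [/eqP E1|A1] /orP [/eqP E2|A2] R1 R2.
- by rewrite E1 E2.
- by subst t1; have := R1 t2 H2; rewrite A2.
- by subst t2; have := R2 t1 H1; rewrite A1.
- case: (Hcmp A1 A2) => [//|[B|B]].
    by have := R2 t1 H1; rewrite B.
  by have := R1 t2 H2; rewrite B.
Qed.

Lemma top_uniq j t : j \in Q -> t \in Q -> (t == j) || ancb t j ->
  (forall w, w \in Q -> ~~ ancb w t) -> top j = t.
Proof.
move=> Hj Ht Htj Rt; have [T1 T2 T3] := top_spec Hj.
exact: (root_uniq T1 Ht T2 Htj T3 Rt).
Qed.

Lemma top_anc u j : u \in Q -> j \in Q -> ancb u j -> top u = top j.
Proof.
move=> Hu Hj Huj; have [T1 T2 T3] := top_spec Hu.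
apply/esym/top_uniq => //.
by case/orP: T2 => [/eqP ->|T2]; rewrite ?Huj ?orbT // (Htr T2 Huj) orbT.
Qed.

Lemma top_row i j j' : j \in Q -> j' \in Q -> A i j != 0 -> A i j' != 0 -> top j = top j'.
Proof.
move=> Hj Hj' A1 A2; have [->//|Ne] := eqVneq j j'.
case/orP: (Hrow A1 A2 Ne) => H; [exact: top_anc | exact/esym/top_anc].
Qed.

Lemma top_top j : j \in Q -> top (top j) = top j.
Proof.
move=> Hj; have [T1 T2 T3] := top_spec Hj; apply: top_uniq => //; by rewrite eqxx.
Qed.

Lemma top_ne j : j \in Q -> top j != j -> ancb (top j) j.
Proof.
move=> Hj Ne; have [_ H _] := top_spec Hj; case/orP: H => // /eqP E.
by rewrite E eqxx in Ne.
Qed.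

Lemma count_drop (Q2 : {set 'I_n}) j : j \in Q -> top j != j -> Q2 \subset Q -> top j \notin Q2 ->
  (#|[set u in Q2 | ancb u j]| < #|[set u in Q | ancb u j]|)%N.
Proof.
move=> Hj Ne HQ Hn; apply: proper_card; apply/properP; split.
  by apply/subsetP => x; rewrite !inE => /andP [Hx ->]; rewrite (subsetP HQ).
have [T1 _ _] := top_spec Hj.
by exists (top j); rewrite !inE ?T1 ?(top_ne Hj Ne) // (negbTE Hn).
Qed.

End Top.

Lemma rv0 i : rv A 0 i = 0.
Proof. by rewrite /rv big1 // => j _; rewrite mxE mulr0. Qed.

Lemma rv_sum (I : finType) (P : pred I) (z : I -> 'rV[rat]_n) i :
  rv A (\sum_(r | P r) z r) i = \sum_(r | P r) rv A (z r) i.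
Proof.
rewrite /rv; under eq_bigr => j _ do rewrite summxE mulr_sumr.
by rewrite exchange_big.
Qed.

Lemma injS_sub (U U2 : {set 'I_n}) (W : {set 'I_m}) : injS A U W -> U2 \subset U -> injS A U2 W.
Proof.
move=> H HU y Hy Hr; apply: H Hr => j Hj; apply: Hy.
by apply: contra Hj; apply: (subsetP HU).
Qed.

Definition Cmx (Y : {set 'I_n}) (Z : {set 'I_m}) : 'M[rat]_(n, n + m) :=
  row_mx (1%:M - PX Y) ((to_rat A)^T *m PX Z).

Lemma rv_mul (y : 'rV[rat]_n) i : (y *m (to_rat A)^T) 0 i = rv A y i.
Proof. by rewrite mxE /rv; apply: eq_bigr => j _; rewrite !mxE mulrC. Qed.

Lemma restrE n' (y : 'rV[rat]_n') U j : restr y U 0 j = if j \in U then y 0 j else 0.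
Proof. by rewrite mxE. Qed.

Lemma kerP (Y : {set 'I_n}) (Z : {set 'I_m}) (u : 'rV[rat]_n) :
  reflect (supp u Y /\ forall i, i \in Z -> rv A u i = 0) (u <= kermx (Cmx Y Z))%MS.
Proof.
rewrite sub_kermx mul_mx_row row_mx_eq0 mulmxBr mulmx1 PX_mul mulmxA PX_mul subr_eq0.
apply: (iffP andP) => [[/eqP H1 /eqP H2] | [H1 H2]]; split.
- move=> j Hj; have := congr1 (fun M : 'rV_n => M 0 j) H1; rewrite /= mxE (negbTE Hj) => ->//.
- move=> i Hi; have := congr1 (fun M : 'rV_m => M 0 i) H2; rewrite /= restrE Hi rv_mul => ->.
  by rewrite mxE.
- by rewrite restr_id.
- apply/eqP/matrixP => k i; rewrite (ord1 k) restrE [RHS]mxE; case: ifP => // Hi.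
  by rewrite rv_mul H2.
Qed.

Lemma VrP (X Y : {set 'I_n}) (Z : {set 'I_m}) (y0 : 'rV[rat]_n) :
  (y0 <= kermx (Cmx Y Z) *m PX X)%MS <->
  exists u, (u <= kermx (Cmx Y Z))%MS /\ y0 = restr u X.
Proof.
split=> [/submxP [D ->] | [u [Hu ->]]].
  by exists (D *m kermx (Cmx Y Z)); rewrite submxMl mulmxA PX_mul.
by rewrite -PX_mul submxMr.
Qed.


Lemma disjP (T0 : finType) (B1 B2 : {set T0}) :
  (forall x, x \in B1 -> x \in B2 -> False) -> [disjoint B1 & B2].
Proof.
move=> H; rewrite disjoint_subset; apply/subsetP => x Hx; rewrite inE.
by apply/negP => Hx2; apply: (H x).
Qed.

Fixpoint Lf (s h : nat) : nat :=
  if h is h'.+1 then (Lf (s + s) h' * Lf 1 h')%N else D s a.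

Lemma Lf_gt0 h : forall s, (0 < Lf s h)%N.
Proof. elim: h => [|h IH] s /=; [exact: D_gt0 | by rewrite muln_gt0 !IH]. Qed.

Definition cnt_ok (Q : {set 'I_n}) h :=
  forall j, j \in Q -> (#|[set u in Q | ancb u j]| < h)%N.

Definition MainP h := forall s (S Q U : {set 'I_n}) (W : {set 'I_m}),
  U \subset S :|: Q -> [disjoint S & Q] -> (#|S| <= s)%N -> cnt_ok Q h ->
  injS A U W -> good A (Lf s h) U W.

Lemma main0 : MainP 0.
Proof.
move=> s S Q U W HU _ HS Hc Hinj.
have Q0 : Q = set0.
  by apply/setP => j; rewrite inE; apply/negP => Hj; have := Hc j Hj.
rewrite Q0 setU0 in HU.
apply: dense => //; exact: leq_trans (subset_leq_card HU) HS.
Qed.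

Lemma shrink h : (forall s (S Q : {set 'I_n}) (W : {set 'I_m}), [disjoint S & Q] ->
  (#|S| <= s)%N -> cnt_ok Q h -> injS A (S :|: Q) W -> good A (Lf s h) (S :|: Q) W) ->
  MainP h.
Proof.
move=> H s S Q U W HU Hd HS Hc Hinj.
have EU : U = (S :&: U) :|: (Q :&: U).
  apply/setP => j; rewrite !inE; case: (boolP (j \in U)) => Hj; rewrite ?andbF ?andbT //=.
  by move/subsetP: HU => /(_ j Hj); rewrite inE.
rewrite EU in Hinj *; apply: H => //.
- apply: disjP => x; rewrite !inE => /andP [H1 _] /andP [H2 _].
  by rewrite (disjointFr Hd H1) in H2.
- exact: leq_trans (subset_leq_card (subsetIl _ _)) HS.
- move=> j; rewrite inE => /andP [HjQ _].
  apply: leq_ltn_trans (Hc j HjQ); apply: subset_leq_card; apply/subsetP => x.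
  by rewrite !inE => /andP [/andP [-> _] ->].
Qed.


Lemma step h : MainP h -> forall s (S Q : {set 'I_n}) (W : {set 'I_m}), [disjoint S & Q] ->
  (#|S| <= s)%N -> cnt_ok Q h.+1 -> injS A (S :|: Q) W -> good A (Lf s h.+1) (S :|: Q) W.
Proof.
move=> IH s S Q W Hd HS Hc Hinj y Hy Hrows j0.
set U := S :|: Q.
have dSQ : forall j, j \in S -> j \in Q -> False.
  by move=> j H1 H2; rewrite (disjointFr Hd H1) in H2.
pose tp := top Q.
pose T r := [set j in Q | tp j == r].
pose R0 := [set i in W | [forall j in Q, A i j == 0]].
pose Rr r := [set i in W | [exists j in T r, A i j != 0]].
pose C r := Cmx (S :|: T r) (R0 :|: Rr r).
pose Vr r := kermx (C r) *m PX S.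
have rowtree : forall i, i \in W -> exists r0,
    (forall j, j \in Q -> A i j != 0 -> tp j = r0) /\ i \in R0 :|: Rr r0.
  move=> i Hi; case: (boolP [forall j in Q, A i j == 0]) => [H0 | /forall_inPn [j1 Hj1 Hnz]].
    exists j0; split; last by rewrite !inE Hi H0.
    by move=> j Hj Hnz; move/forall_inP: H0 => /(_ j Hj) /eqP E; rewrite E eqxx in Hnz.
  exists (tp j1); split.
    by move=> j Hj Hnz'; exact: (top_row Hj Hj1 Hnz' Hnz).
  rewrite !inE Hi /=; apply/orP; right; apply/exists_inP; exists j1 => //.
  by rewrite !inE Hj1 eqxx.
have inT : forall j r, (j \in T r) = (j \in Q) && (tp j == r) by move=> j r; rewrite inE.
have Hclaim : forall y0 : 'rV[rat]_n, (y0 <= PX S)%MS -> (forall r, (y0 <= Vr r)%MS) -> y0 = 0.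
  move=> y0 /sub_PX Hy0 Hall.
  have : forall r, exists u, (u <= kermx (C r))%MS /\ y0 = restr u S.
    by move=> r; apply/VrP; apply: Hall.
  case/fin_all_exists => f Hf.
  have Hf1 : forall r, supp (f r) (S :|: T r) /\ (forall i, i \in R0 :|: Rr r -> rv A (f r) i = 0).
    by move=> r; apply/kerP; case: (Hf r).
  pose x := y0 + \sum_r restr (f r) (T r).
  have Hxe : forall j, x 0 j = y0 0 j + (if j \in Q then f (tp j) 0 j else 0).
    move=> j; rewrite mxE summxE; congr (_ + _).
    rewrite (bigD1 (tp j)) //= big1 => [|r Hr].
      by rewrite restrE inT eqxx andbT addr0.
    by rewrite restrE inT eq_sym (negbTE Hr) andbF.
  have Hx0 : x = 0.
    apply: Hinj.
      move=> j; rewrite inE negb_or => /andP [HjS HjQ].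
      by rewrite Hxe (negbTE HjQ) Hy0 // addr0.
    move=> i Hi; have [r0 [Hr0 Hir0]] := rowtree i Hi.
    rewrite -((Hf1 r0).2 i Hir0); apply: rv_ext => j Hnz.
    rewrite Hxe; case: (boolP (j \in S)) => HjS.
      have HjQ : j \in Q = false by apply/negP => HjQ; apply: (dSQ j).
      by rewrite HjQ addr0 (proj2 (Hf r0)) restrE HjS.
    rewrite Hy0 // add0r; case: (boolP (j \in Q)) => HjQ.
      by rewrite (Hr0 j HjQ Hnz).
    by rewrite (proj1 (Hf1 r0)) // inE negb_or HjS inT (negbTE HjQ).
  apply/matrixP => k j; rewrite (ord1 k) [RHS]mxE.
  case: (boolP (j \in S)) => HjS; last by rewrite Hy0.
  have HjQ : j \in Q = false by apply/negP => HjQ; apply: (dSQ j).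
  by have := Hxe j; rewrite Hx0 HjQ addr0 mxE => <-.
have [J [HJ HG]] := @greedy _ _ Vr s (PX S) (leq_trans (PX_rank S) HS) Hclaim.
pose U' := S :|: [set j in Q | tp j \in J].
pose S' := S :|: [set r in Q | (r \in J) && (tp r == r)].
pose Q' := [set j in Q | (tp j \in J) && (tp j != j)].
pose W' := [set i in W | [forall j in Q, (A i j != 0) ==> (tp j \in J)]].
pose L1 := Lf (s + s) h.
have HU' : U' \subset S' :|: Q'.
  apply/subsetP => j; rewrite !inE => /orP [->//|/andP [Hj HJj]].
  have [E|E] := eqVneq (tp j) j.
    by rewrite E in HJj; rewrite Hj HJj orbT.
  by rewrite Hj HJj !orbT.
have Hd' : [disjoint S' & Q'].
  apply: disjP => j; rewrite !inE => /orP [HjS | /andP [_ /andP [_ /eqP E]]] /andP [HjQ /andP [_ E']].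
    exact: (dSQ j).
  by rewrite E eqxx in E'.
have HS' : (#|S'| <= s + s)%N.
  rewrite cardsU.
  have : (#|[set r in Q | (r \in J) && (tp r == r)]| <= #|J|)%N.
    by apply: subset_leq_card; apply/subsetP => r; rewrite inE => /andP [_ /andP [-> _]].
  lia.
have Hc' : cnt_ok Q' h.
  move=> j; rewrite inE => /andP [HjQ /andP [_ Ne]].
  have : (#|[set u in Q' | ancb u j]| < #|[set u in Q | ancb u j]|)%N.
    apply: count_drop => //.
      by apply/subsetP => u; rewrite inE => /andP [->].
    by rewrite inE /tp top_top // eqxx !andbF.
  have := Hc j HjQ; lia.
have inU' : forall j, (j \in U') = (j \in S) || (j \in Q) && (tp j \in J).
  by move=> j; rewrite !inE.
have notSQ : forall j, j \in S -> (j \in Q) = false.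
  by move=> j HjS; apply/negP => HjQ; apply: (dSQ j).
have rowT : forall i j1 r, j1 \in T r -> A i j1 != 0 ->
    forall j, j \in Q -> A i j != 0 -> tp j = r.
  move=> i j1 r; rewrite inT => /andP [Hj1 /eqP <-] Hnz1 j Hj Hnz.
  exact: (top_row Hj Hj1 Hnz Hnz1).
have Hinj' : injS A U' W'.
  move=> x Hx Hxr.
  pose y0 := restr x S.
  have Hy0S : (y0 <= PX S)%MS by apply/sub_PX/restr_supp.
  have Hy0J : forall r, r \in J -> (y0 <= Vr r)%MS.
    move=> r Hr; apply/VrP; exists (restr x (S :|: T r)); split.
      apply/kerP; split; first exact: restr_supp.
      move=> i Hi.
      have Hir : i \in W /\ forall j, j \in Q -> A i j != 0 -> tp j = r.
        move: Hi; rewrite !inE => /orP [/andP [HiW /forall_inP H0] | /andP [HiW /exists_inP [j1 Hj1 Hnz1]]].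
          split=> // j Hj Hnz; by have := H0 j Hj; rewrite (negbTE Hnz).
        by split=> //; apply: rowT Hj1 Hnz1.
      have HiW' : i \in W'.
        rewrite inE (proj1 Hir); apply/forall_inP => j Hj; apply/implyP => Hnz.
        by rewrite ((proj2 Hir) j Hj Hnz).
      rewrite -(Hxr i HiW'); apply: rv_ext => j Hnz.
      rewrite restrE inE inT; case: (boolP (j \in S)) => HjS //=.
      case: (boolP (j \in Q)) => HjQ /=.
        by rewrite ((proj2 Hir) j HjQ Hnz) eqxx.
      by rewrite Hx // inU' (negbTE HjS) (negbTE HjQ).
    apply/matrixP => k j; rewrite (ord1 k) !restrE inE.
    by case: (j \in S).
  have y00 : y0 = 0 := HG y0 Hy0S Hy0J.
  have HxS : forall j, j \in S -> x 0 j = 0.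
    by move=> j HjS; have := congr1 (fun M : 'rV_n => M 0 j) y00; rewrite /= restrE HjS mxE.
  have Htree : forall r, r \in J -> restr x (T r) = 0.
    move=> r Hr; apply: Hinj.
      move=> j Hj; rewrite restrE; case: ifP => // HjT; exfalso.
      by move: HjT; rewrite inT => /andP [HjQ _]; move: Hj; rewrite inE HjQ orbT.
    move=> i Hi.
    case: (boolP [exists j in T r, A i j != 0]) => [/exists_inP [j1 Hj1 Hnz1] | /exists_inPn Hno].
      have HiW' : i \in W'.
        rewrite inE Hi; apply/forall_inP => j Hj; apply/implyP => Hnz.
        by rewrite (rowT i j1 r Hj1 Hnz1 j Hj Hnz).
      rewrite -(Hxr i HiW'); apply: rv_ext => j Hnz.
      rewrite restrE inT; case: (boolP (j \in S)) => HjS.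
        by rewrite notSQ // HxS.
      case: (boolP (j \in Q)) => HjQ /=.
        by rewrite (rowT i j1 r Hj1 Hnz1 j HjQ Hnz) eqxx.
      by rewrite Hx // inU' (negbTE HjS) (negbTE HjQ).
    rewrite -(rv0 i); apply: rv_ext => j Hnz; rewrite restrE mxE.
    by case: ifP => // HjT; have := Hno j HjT; rewrite Hnz.
  apply/matrixP => k j; rewrite (ord1 k) [RHS]mxE.
  case: (boolP (j \in S)) => HjS; first exact: HxS.
  case: (boolP ((j \in Q) && (tp j \in J))) => [/andP [HjQ HJj] | Hn].
    have := congr1 (fun M : 'rV_n => M 0 j) (Htree _ HJj).
    by rewrite /= restrE inT HjQ eqxx mxE.
  by rewrite Hx // inU' (negbTE HjS) (negbTE Hn).
have Hrows' : forall i, i \in W' -> rv A (restr y U') i \is a Num.int.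
  move=> i; rewrite inE => /andP [HiW /forall_inP HiJ].
  have -> : rv A (restr y U') i = rv A y i.
    apply: rv_ext => j Hnz; rewrite restrE inU'.
    case: (boolP (j \in S)) => //= HjS; case: (boolP (j \in Q)) => //= HjQ.
      by move/implyP: (HiJ j HjQ) => /(_ Hnz) ->.
    by rewrite Hy // inE negb_or HjS HjQ.
  exact: Hrows.
have HL1 := IH (s + s) S' Q' U' W' HU' Hd' HS' Hc' Hinj' (restr y U') (@restr_supp _ y U') Hrows'.
rewrite /= natrM.
case: (boolP (j0 \in U')) => Hj0.
  have := HL1 j0; rewrite restrE Hj0 => H.
  by rewrite (mulrC L1%:R) -mulrA; apply: rpredM; rewrite ?Num.Theory.natr_int.
case: (boolP (j0 \in Q)) => Hj0Q; last first.
  rewrite Hy ?mulr0 ?rpred0 // inE negb_or Hj0Q andbT.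
  by apply: contra Hj0 => H; rewrite inU' H.
pose r := tp j0.
have Hr : r \notin J by apply: contra Hj0 => H; rewrite inU' Hj0Q H orbT.
pose Q'' := [set j in Q | (tp j == r) && (j != r)].
have HU'' : T r \subset [set r] :|: Q''.
  apply/subsetP => j; rewrite inT !inE => /andP [Hj E].
  by case: eqVneq => //=; rewrite Hj E.
have Hd'' : [disjoint [set r] & Q''].
  by apply: disjP => j; rewrite !inE => /eqP -> /andP [_ /andP [_ /eqP]].
have HS'' : (#|[set r]| <= 1)%N by rewrite cards1.
have Hc'' : cnt_ok Q'' h.
  move=> j; rewrite inE => /andP [HjQ /andP [/eqP E Ne]].
  have : (#|[set u in Q'' | ancb u j]| < #|[set u in Q | ancb u j]|)%N.
    apply: count_drop => //.
      by rewrite -/tp E eq_sym.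
      by apply/subsetP => u; rewrite inE => /andP [->].
    by rewrite inE -/tp E eqxx !andbF.
  have := Hc j HjQ; lia.
have Hinj'' : injS A (T r) W.
  apply: injS_sub Hinj _; apply/subsetP => j; rewrite inT inE => /andP [-> _]; by rewrite orbT.
pose v := (L1%:R : rat) *: restr y (T r).
have Hv : supp v (T r) by move=> j Hj; rewrite mxE restrE (negbTE Hj) mulr0.
have Hvr : forall i, i \in W -> rv A v i \is a Num.int.
  move=> i Hi; rewrite rvZ.
  case: (boolP [exists j in T r, A i j != 0]) => [/exists_inP [j1 Hj1 Hnz1] | /exists_inPn Hno].
    have -> : rv A (restr y (T r)) i = rv A y i - rv A (restr y S) i.
      apply/eqP; rewrite eq_sym subr_eq -rvD; apply/eqP; apply: rv_ext => j Hnz.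
      rewrite mxE !restrE inT; case: (boolP (j \in S)) => HjS.
        by rewrite notSQ // add0r.
      case: (boolP (j \in Q)) => HjQ /=.
        by rewrite (rowT i j1 r Hj1 Hnz1 j HjQ Hnz) eqxx addr0.
      by rewrite Hy ?addr0 // inE negb_or HjS HjQ.
    rewrite mulrBr -[X in _ - X]rvZ; apply: rpredB.
      by apply: rpredM; rewrite ?Num.Theory.natr_int // Hrows.
    apply: rv_int => j; rewrite mxE restrE; case: ifP => HjS; last by rewrite mulr0 rpred0.
    by have := HL1 j; rewrite restrE inU' HjS.
  have -> : rv A (restr y (T r)) i = 0.
    rewrite -(rv0 i); apply: rv_ext => j Hnz; rewrite restrE mxE.
    by case: ifP => // HjT; have := Hno j HjT; rewrite Hnz.
  by rewrite mulr0 rpred0.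
have := IH 1 [set r] Q'' (T r) W HU'' Hd'' HS'' Hc'' Hinj'' v Hv Hvr j0.
rewrite mxE restrE inT Hj0Q eqxx /=.
by rewrite mulrA (mulrC (Lf 1 h)%:R).
Qed.


Lemma mainP h : MainP h.
Proof.
elim: h => [|h IH]; first exact: main0.
by apply: shrink; apply: step.
Qed.

End Main.

Lemma denq_le (L : nat) (q : rat) : (0 < L)%N -> (L%:R * q) \is a Num.int ->
  (`|denq q| <= L)%N.
Proof.
move=> L0 /Num.Theory.intrP [z Hz].
have E : (L%:Z * numq q = z * denq q)%R.
  apply: (@intr_inj rat); rewrite !intrM numqE mulrA -Hz; by [].
have Hd : (`|denq q| %| `|numq q| * L)%N.
  have := congr1 absz E; rewrite !abszM /= => E'.
  by rewrite mulnC E' dvdn_mull.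
rewrite Gauss_dvdr in Hd; last by rewrite coprime_sym coprime_num_den.
exact: dvdn_leq L0 Hd.
Qed.

Theorem theorem2 :
  { g : nat -> nat -> nat |
    forall (m n : nat) (A : 'M[int]_(m, n)) (p : 'I_n -> option 'I_n),
      td_decomposition (primal_graph A) p ->
      forall s : 'I_m -> 'I_n, injective s ->
        to_rat (colsub s A) \in unitmx ->
        (fr (invmx (to_rat (colsub s A))) <= g (height p) (mx_norm_inf A))%N }.
Proof.
exists (fun d a => Lf a 0 d).
move=> m n A p [[acyc _] Hcl] s Hs Hunit.
set B := to_rat (colsub s A).
set M := invmx B.
pose ancb : rel 'I_n := ancestor p.
have Ha : forall i j, (absz (A i j) <= mx_norm_inf A)%N.
  move=> i j; rewrite /mx_norm_inf.
  exact: (leq_trans (@leq_bigmax _ (fun j => absz (A i j)) j)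
     (@leq_bigmax _ (fun i => (\max_(j : 'I_n) absz (A i j))%N) i)).
have Htr : forall u w v, ancb u w -> ancb w v -> ancb u v.
  move=> u w v /(ancestorP acyc) H1 /(ancestorP acyc) H2; apply/(ancestorP acyc).
  exact: anc_trans H1 H2.
have Hirr : forall u, ~~ ancb u u.
  by move=> u; apply/negP => /(ancestorP acyc); apply: anc_irr.
have Hcmp : forall u w v, ancb u v -> ancb w v -> u = w \/ ancb u w \/ ancb w u.
  move=> u w v /(ancestorP acyc) H1 /(ancestorP acyc) H2.
  case: (anc_cmp H1 H2) => [->|[H|H]]; [by left | right; left | right; right]; exact/(ancestorP acyc).
have Hrow : forall i j j', A i j != 0 -> A i j' != 0 -> j != j' -> ancb j j' || ancb j' j.
  move=> i j j' H1 H2 Ne; apply: Hcl; rewrite /primal_graph Ne /=.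
  by apply/existsP; exists i; rewrite H1 H2.
pose U := s @: [set: 'I_m].
have HsU : forall i, s i \in U by move=> i; rewrite imset_f ?inE.
have Hc : cnt_ok ancb U (height p).
  move=> j Hj.
  apply: (leq_trans _ (@leq_bigmax _ (fun v => #|[set u | (u == v) || ancestor p u v]|) j)).
  apply: proper_card; apply/properP; split.
    by apply/subsetP => u; rewrite !inE => /andP [_ H]; apply/orP; right.
  by exists j; rewrite !inE ?eqxx // (negbTE (Hirr j)) andbF.
have HB : forall l i, B l i = (A l (s i))%:~R by move=> l i; rewrite !mxE.
have Hinj : injS A U [set: 'I_m].
  move=> y Hy Hr.
  pose z : 'cV[rat]_m := \col_i y 0 (s i).
  have Hrvz : forall l, rv A y l = (B *m z) l 0.
    move=> l; rewrite /rv mxE.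
    rewrite (bigID (fun j => j \in U)) /= [X in _ + X]big1 ?addr0 => [|j Hj]; last by rewrite Hy // mulr0.
    rewrite big_imset /=; last by move=> i1 i2 _ _; apply: Hs.
    rewrite (eq_bigl _ _ (fun i => in_setT i)); apply: eq_bigr => i _; by rewrite HB !mxE.
  have Bz0 : B *m z = 0.
    by apply/matrixP => l k; rewrite (ord1 k) -Hrvz Hr ?inE // mxE.
  have z0 : z = 0 by rewrite -(mulKmx Hunit z) Bz0 mulmx0.
  apply/matrixP => k j; rewrite (ord1 k) [RHS]mxE.
  case: (boolP (j \in U)) => Hj; last by rewrite Hy.
  case/imsetP: Hj => i _ ->; have := congr1 (fun N : 'cV_m => N i 0) z0; by rewrite !mxE.
rewrite /fr; apply/bigmax_leqP => i _; apply/bigmax_leqP => k _.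
pose y : 'rV[rat]_n := \row_j \sum_(i' | s i' == j) M i' k.
have Hy : supp y U.
  move=> j Hj; rewrite mxE big_pred0 // => i'; apply/negP => /eqP E.
  by rewrite -E HsU in Hj.
have Hyr : forall l, l \in [set: 'I_m] -> rv A y l \is a Num.int.
  move=> l _.
  have -> : rv A y l = (B *m M) l k.
    rewrite /rv mxE.
    rewrite (eq_bigr (fun j => \sum_i' (if s i' == j then (A l j)%:~R * M i' k else 0))); last first.
      by move=> j _; rewrite mxE mulr_sumr big_mkcond.
    rewrite exchange_big; apply: eq_bigr => i' _.
    rewrite -big_mkcond /= (big_pred1 (s i')) ?HB //.
  have BM : B *m M = 1%:M := mulmxV Hunit.
  by rewrite BM mxE Num.Theory.natr_int.
have := mainP Ha Htr Hirr Hcmp Hrow (h := height p) (s := 0) (S := set0) (Q := U) (U := U)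
  (W := [set: 'I_m]).
have D0 : [disjoint set0 & U] by apply: disjP => x; rewrite inE.
have C0 : (#|(set0 : {set 'I_n})| <= 0)%N by rewrite cards0.
rewrite set0U subxx => /(_ isT D0 C0 Hc Hinj y Hy Hyr (s i)) H.
apply: denq_le; first exact: Lf_gt0.
suff <- : y 0 (s i) = M i k by [].
rewrite mxE (big_pred1 i) // => i'; by rewrite /= (inj_eq Hs).
Qed.
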